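(* Let $h>0$, $n\in\mathbb{N}$, and let $\lambda:\mathbb{T}\to\mathbb{R}$ be an $n$-cycle with values $\lambda_0,\dots,\lambda_{n-1}\in\mathbb{R}\setminus\{\pm\tfrac1h\}$, such that $0<|e_{\lambda}(nh)|\neq1$ and $0<|e_{-\lambda}(nh)|\neq1$. Then the discrete Hill-type equation $$\Delta_h^2 y(t)+\bigl[\Delta_h\lambda(t)-\lambda(t)\lambda(t+h)\bigr]y(t)=0,\qquad t\in\mathbb{T},$$ has Hyers–Ulam stability on $\mathbb{T}$ with Hyers–Ulam stability constant $K=K_0(\lambda)K_0(-\lambda)$.
   Context: Fix $h>0$ and let $\mathbb{T}=\{0,h,2h,3h,\dots\}$. For $x:\mathbb{T}\to\mathbb{R}$, $\Delta_h x(t)=\frac{x(t+h)-x(t)}{h}$ and $\Delta_h^2x=\Delta_h(\Delta_h x)$, $\Delta_h^3x=\Delta_h(\Delta_h^2 x)$. An $n$-cycle is a function $\mu:\mathbb{T}\to\mathbb{R}$ with $\mu(t)=\mu_k$ whenever $t/h\equiv k\pmod n$, $k\in\{0,\dots,n-1\}$, which has period $n$ and no smaller period. For such $\mu$ define the discrete exponential $e_\mu(t)=\prod_{k=0}^{t/h-1}(1+h\mu(kh))$ (empty product $=1$), so $e_\mu(nh)=\prod_{k=0}^{n-1}(1+h\mu_k)$. For $k\in\{0,\dots,n-1\}$ define $$S_k(\mu)=\sum_{j=1}^{n}\prod_{i=0}^{j-1}\frac{1}{|1+h\mu_{(k+i)\bmod n}|},$$ (e.g. $S_0(\mu)=\frac{1}{|1+h\mu_0|}+\frac{1}{|1+h\mu_0||1+h\mu_1|}+\dots+\frac{1}{|1+h\mu_0|\cdots|1+h\mu_{n-1}|}$),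 and, when $0<|e_\mu(nh)|\neq1$, $$K_0(\mu)=\frac{h|e_\mu(nh)|}{\bigl|1-|e_\mu(nh)|\bigr|}\max\{S_0(\mu),\dots,S_{n-1}(\mu)\}.$$ Here $-\lambda$ denotes the $n$-cycle with values $-\lambda_0,\dots,-\lambda_{n-1}$. Hyers–Ulam stability: an equation $\mathcal{L}[y](t)=f(t)$, $t\in\mathbb{T}$ (with $\mathcal{L}$ a linear difference operator) has Hyers–Ulam stability on $\mathbb{T}$ with Hyers–Ulam stability constant $K>0$ if for every $\varepsilon>0$ and every $\xi:\mathbb{T}\to\mathbb{R}$ with $|\mathcal{L}[\xi](t)-f(t)|\le\varepsilon$ for all $t\in\mathbb{T}$, there is a solution $y:\mathbb{T}\to\mathbb{R}$ of the equation with $|\xi(t)-y(t)|\le K\varepsilon$ for all $t\in\mathbb{T}$. The minimum Hyers–Ulam stability constant is the smallest such $K$. *)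

(* Defs.v *)
From Stdlib Require Import Reals Lra Lia Arith.
Open Scope R_scope.

(* A function x : T -> R on T = {0,h,2h,...} is encoded as x : nat -> R,
   with x k standing for x(k h). *)

Fixpoint prodR (f : nat -> R) (m : nat) : R :=
  match m with O => 1 | S m' => prodR f m' * f m' end.

Fixpoint sumR (f : nat -> R) (m : nat) : R :=
  match m with O => 0 | S m' => sumR f m' + f m' end.

Fixpoint maxR (f : nat -> R) (m : nat) : R :=
  match m with O => f O | S m' => Rmax (maxR f m') (f (S m')) end.

Definition Dh (h : R) (x : nat -> R) : nat -> R :=
  fun k => (x (S k) - x k) / h.

Definition is_ncycle (n : nat) (mu : nat -> R) : Prop :=
  (0 < n)%nat /\
  (forall k, mu (k + n)%nat = mu k) /\
  (forall m, (0 < m < n)%nat -> ~ (forall k, mu (k + m)%nat = mu k)).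

Definition e_exp (h : R) (mu : nat -> R) (m : nat) : R :=
  prodR (fun k => 1 + h * mu k) m.

Definition S_k (h : R) (n : nat) (mu : nat -> R) (k : nat) : R :=
  sumR (fun j => prodR (fun i => / Rabs (1 + h * mu ((k + i) mod n)%nat)) (S j)) n.

Definition K0 (h : R) (n : nat) (mu : nat -> R) : R :=
  h * Rabs (e_exp h mu n) / Rabs (1 - Rabs (e_exp h mu n))
  * maxR (S_k h n mu) (n - 1)%nat.

Definition negf (mu : nat -> R) : nat -> R := fun k => - mu k.

Definition HU_stable (L : (nat -> R) -> nat -> R) (f : nat -> R) (K : R) : Prop :=
  0 < K /\
  forall eps : R, 0 < eps ->
  forall xi : nat -> R, (forall k, Rabs (L xi k - f k) <= eps) ->
  exists y : nat -> R, (forall k, L y k = f k) /\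
                       (forall k, Rabs (xi k - y k) <= K * eps).

Definition hillL (h : R) (lam : nat -> R) (y : nat -> R) : nat -> R :=
  fun k => Dh h (Dh h y) k + (Dh h lam k - lam k * lam (S k)) * y k.

(* Main.v *)
Require Import Defs.
From Stdlib Require Import Reals.
From Coquelicot Require Import Coquelicot.
From Stdlib Require Import Lra Lia Arith.
Open Scope R_scope.

Lemma prodR_ext f g m : (forall i, (i < m)%nat -> f i = g i) -> prodR f m = prodR g m.
Proof. induction m; intros H; simpl; auto. rewrite IHm by (intros; apply H; lia). rewrite H by lia; auto. Qed.

Lemma sumR_ext f g m : (forall i, (i < m)%nat -> f i = g i) -> sumR f m = sumR g m.
Proof. induction m; intros H; simpl; auto. rewrite IHm by (intros; apply H; lia). rewrite H by lia; auto. Qed.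

Lemma prodR_front f m : prodR f (S m) = f O * prodR (fun i => f (S i)) m.
Proof. induction m; simpl in *. ring. rewrite IHm. ring. Qed.

Lemma sumR_front f m : sumR f (S m) = f O + sumR (fun i => f (S i)) m.
Proof. induction m; simpl in *. ring. rewrite IHm. ring. Qed.

Lemma prodR_pos f m : (forall i, 0 < f i) -> 0 < prodR f m.
Proof. induction m; simpl; intros; [lra|]. apply Rmult_lt_0_compat; auto. Qed.

Lemma prodR_nz f m : (forall i, f i <> 0) -> prodR f m <> 0.
Proof. induction m; simpl; intros; [lra|]. apply Rmult_integral_contrapositive; auto. Qed.

Lemma sumR_pos f m : (0 < m)%nat -> (forall i, 0 < f i) -> 0 < sumR f m.
Proof. induction m; simpl; intros; [lia|]. destruct m. simpl. specialize (H0 O). lra.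
  assert (0 < sumR f (S m)) by (apply IHm; auto; lia). specialize (H0 (S m)). lra. Qed.

Lemma prodR_Rabs f m : Rabs (prodR f m) = prodR (fun i => Rabs (f i)) m.
Proof. induction m; simpl. apply Rabs_R1. rewrite Rabs_mult, IHm; auto. Qed.

Lemma prodR_inv f m : (forall i, f i <> 0) -> / prodR f m = prodR (fun i => / f i) m.
Proof. induction m; simpl; intros. apply Rinv_1. rewrite Rinv_mult, IHm; auto. Qed.

Lemma maxR_ge f m j : (j <= m)%nat -> f j <= maxR f m.
Proof. induction m; intros. replace j with O by lia. simpl; lra.
  simpl. destruct (Nat.eq_dec j (S m)). subst. apply Rmax_r.
  eapply Rle_trans. apply IHm; lia. apply Rmax_l. Qed.

Lemma per_mod (n : nat) (f : nat -> R) : (0 < n)%nat -> (forall k, f (k + n)%nat = f k) ->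
  forall k, f (k mod n)%nat = f k.
Proof. intros Hn Hp k. rewrite (Nat.div_mod_eq k n) at 2.
  generalize (k / n)%nat. intro q. induction q. rewrite Nat.mul_0_r; simpl; auto.
  replace (n * S q + k mod n)%nat with ((n * q + k mod n) + n)%nat by lia. rewrite Hp; auto. Qed.

Lemma cyclic (n : nat) (f : nat -> R) : (0 < n)%nat -> (forall k, f (k + n)%nat = f k) ->
  (forall k, f k <> 0) -> forall s, prodR (fun i => f (s + i)%nat) n = prodR f n.
Proof. intros Hn Hp Hz s. induction s. apply prodR_ext; intros; f_equal.
  rewrite <- IHs.
  assert (E: prodR (fun i => f (s + i)%nat) (S n) = f s * prodR (fun i => f (S s + i)%nat) n).
  { rewrite prodR_front. f_equal. f_equal. lia. apply prodR_ext. intros; f_equal; lia. }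
  simpl prodR at 1 in E. rewrite Hp in E. apply Rmult_eq_reg_l with (f s); auto. rewrite <- E. ring. Qed.

Lemma sumR_scal c f m : sumR (fun j => c * f j) m = c * sumR f m.
Proof. induction m; simpl. ring. rewrite IHm; ring. Qed.

Section S.
Variables (h : R) (n : nat) (mu : nat -> R).
Hypothesis Hn : (0 < n)%nat.
Hypothesis Hp : forall k, mu (k + n)%nat = mu k.
Hypothesis Hz : forall k, 1 + h * mu k <> 0.

Lemma Sk_nomod k : S_k h n mu k = sumR (fun j => prodR (fun i => / Rabs (1 + h * mu (k + i)%nat)) (S j)) n.
Proof. unfold S_k. apply sumR_ext; intros. apply prodR_ext; intros. rewrite per_mod; auto. Qed.

Lemma Sk_mod k : S_k h n mu (k mod n) = S_k h n mu k.
Proof. rewrite !Sk_nomod. apply sumR_ext; intros j Hj. apply prodR_ext; intros i Hi. cbv beta.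
  rewrite <- (per_mod n mu Hn Hp (k + i)). rewrite <- (per_mod n mu Hn Hp (k mod n + i)).
  rewrite Nat.Div0.add_mod_idemp_l; reflexivity. Qed.

Lemma Sk_pos k : 0 < S_k h n mu k.
Proof. apply sumR_pos; auto. intros. apply prodR_pos. intros. apply Rinv_0_lt_compat. apply Rabs_pos_lt. auto. Qed.

Lemma prod_inv_P s : prodR (fun i => / Rabs (1 + h * mu (s + i)%nat)) n = / Rabs (e_exp h mu n).
Proof.
  rewrite (cyclic n (fun i => / Rabs (1 + h * mu i))); auto.
  - unfold e_exp. rewrite prodR_Rabs, prodR_inv. auto. intros. apply Rabs_no_R0; auto.
  - intros; simpl. rewrite Hp; auto.
  - intros. apply Rinv_neq_0_compat. apply Rabs_no_R0; auto.
Qed.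

Lemma Sk_ident k : Rabs (1 + h * mu k) * S_k h n mu k = 1 + S_k h n mu (S k) - / Rabs (e_exp h mu n).
Proof.
  rewrite !Sk_nomod.
  assert (E1: sumR (fun j => prodR (fun i => / Rabs (1 + h * mu (k + i)%nat)) (S j)) n =
     / Rabs (1 + h * mu k) * sumR (fun j => prodR (fun i => / Rabs (1 + h * mu (S k + i)%nat)) j) n).
  { rewrite <- sumR_scal. apply sumR_ext; intros j Hj. rewrite prodR_front. rewrite Nat.add_0_r. f_equal.
    apply prodR_ext; intros i Hi. cbv beta. replace (k + S i)%nat with (S k + i)%nat by lia; reflexivity. }
  assert (E2: sumR (fun j => prodR (fun i => / Rabs (1 + h * mu (S k + i)%nat)) j) (S n) =
     sumR (fun j => prodR (fun i => / Rabs (1 + h * mu (S k + i)%nat)) j) n + / Rabs (e_exp h mu n)).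
  { rewrite <- (prod_inv_P (S k)). reflexivity. }
  rewrite sumR_front in E2. simpl prodR at 1 in E2.
  rewrite E1, <- Rmult_assoc, Rinv_r, Rmult_1_l. lra. apply Rabs_no_R0; auto.
Qed.
End S.

Section C.
Variables (h : R) (n : nat) (mu : nat -> R) (M : R).
Hypothesis Hh : 0 < h.
Hypothesis Hn : (0 < n)%nat.
Hypothesis Hp : forall k, mu (k + n)%nat = mu k.
Hypothesis Hz : forall k, 1 + h * mu k <> 0.
Hypothesis HM : forall k, S_k h n mu k <= M.

Lemma P_pos : 0 < Rabs (e_exp h mu n).
Proof. apply Rabs_pos_lt. apply prodR_nz. auto. Qed.

Lemma final_bound d x s : 0 <= d -> 0 < s -> s <> 1 -> 0 <= x -> x <= M ->
  h * d * (s * x / Rabs (1 - s)) <= h * s / Rabs (1 - s) * M * d.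
Proof. intros. assert (0 < Rabs (1 - s)) by (apply Rabs_pos_lt; lra).
  replace (h * d * (s * x / Rabs (1 - s))) with ((h * s / Rabs (1 - s) * d) * x) by (field; lra).
  replace (h * s / Rabs (1 - s) * M * d) with ((h * s / Rabs (1 - s) * d) * M) by (field; lra).
  apply Rmult_le_compat_l; auto. apply Rmult_le_pos; [|lra]. apply Rmult_le_pos; [|left; apply Rinv_0_lt_compat; auto]. nra.
Qed.

Lemma core_lt : Rabs (e_exp h mu n) < 1 -> forall g d, (forall k, Rabs (g k) <= d) ->
  exists u, (forall k, u (S k) = (1 + h * mu k) * u k + h * g k) /\
   forall k, Rabs (u k) <= h * Rabs (e_exp h mu n) / Rabs (1 - Rabs (e_exp h mu n)) * M * d.
Proof.
  intros HP g d Hg. pose proof P_pos as HP0. set (P := Rabs (e_exp h mu n)) in *.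
  assert (Hd : 0 <= d) by (eapply Rle_trans; [apply Rabs_pos | apply (Hg O)]).
  assert (HA : Rabs (1 - P) = 1 - P) by (apply Rabs_right; lra).
  exists (fix f k := match k with O => 0 | S k' => (1 + h * mu k') * f k' + h * g k' end).
  split. intro; reflexivity.
  set (u := (fix f k := match k with O => 0 | S k' => (1 + h * mu k') * f k' + h * g k' end)).
  assert (B : forall k, Rabs (u k) <= h * d * (P * S_k h n mu k / Rabs (1 - P))).
  { rewrite HA. induction k.
    - simpl. rewrite Rabs_R0. pose proof (Sk_pos h n mu Hn Hz O).
      apply Rmult_le_pos. nra. apply Rmult_le_pos. nra. left; apply Rinv_0_lt_compat; lra.
    - change (u (S k)) with ((1 + h * mu k) * u k + h * g k).
      pose proof (Sk_ident h n mu Hn Hp Hz k) as I. fold P in I.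
      assert (E : S_k h n mu (S k) = Rabs (1 + h * mu k) * S_k h n mu k - 1 + / P) by lra.
      rewrite E.
      eapply Rle_trans. apply Rabs_triang. rewrite !Rabs_mult, (Rabs_right h) by lra.
      specialize (Hg k). pose proof (Rabs_pos (1 + h * mu k)).
      apply Rle_trans with (Rabs (1 + h * mu k) * (h * d * (P * S_k h n mu k / (1 - P))) + h * d).
      + apply Rplus_le_compat. apply Rmult_le_compat_l; auto. apply Rmult_le_compat_l; lra.
      + right. field. lra. }
  intro k. eapply Rle_trans. apply B. apply final_bound; auto. lra.
  left; apply Sk_pos; auto.
Qed.
End C.

Lemma sum_n_sumR f N : sum_n f N = sumR f (S N).
Proof. induction N. rewrite sum_O. simpl. rewrite Rplus_0_l. reflexivity. rewrite sum_Sn, IHN. simpl. reflexivity. Qed.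

Section C.
Variables (h : R) (n : nat) (mu : nat -> R) (M : R).
Hypothesis Hh : 0 < h.
Hypothesis Hn : (0 < n)%nat.
Hypothesis Hp : forall k, mu (k + n)%nat = mu k.
Hypothesis Hz : forall k, 1 + h * mu k <> 0.
Hypothesis HM : forall k, S_k h n mu k <= M.

Definition qq k m := prodR (fun i => / Rabs (1 + h * mu (k + i)%nat)) (S m).
Definition cc (g : nat -> R) k m := g (k + m)%nat * prodR (fun i => / (1 + h * mu (k + i)%nat)) (S m).

Lemma qq_S k m : qq k (S m) = / Rabs (1 + h * mu k) * qq (S k) m.
Proof. unfold qq. rewrite prodR_front. rewrite Nat.add_0_r. f_equal.
  apply prodR_ext; intros i Hi. cbv beta. replace (k + S i)%nat with (S k + i)%nat by lia; reflexivity. Qed.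

Lemma cc_S g k m : cc g k (S m) = / (1 + h * mu k) * cc g (S k) m.
Proof. unfold cc. rewrite prodR_front. rewrite Nat.add_0_r.
  replace (k + S m)%nat with (S k + m)%nat by lia.
  rewrite (prodR_ext (fun i => / (1 + h * mu (k + S i)%nat)) (fun i => / (1 + h * mu (S k + i)%nat))).
  ring. intros i Hi. replace (k + S i)%nat with (S k + i)%nat by lia; reflexivity. Qed.

Lemma qq_pos k m : 0 < qq k m.
Proof. apply prodR_pos. intros. apply Rinv_0_lt_compat, Rabs_pos_lt; auto. Qed.

Lemma core_gt : 1 < Rabs (e_exp h mu n) -> forall g d, (forall k, Rabs (g k) <= d) ->
  exists u, (forall k, u (S k) = (1 + h * mu k) * u k + h * g k) /\
   forall k, Rabs (u k) <= h * Rabs (e_exp h mu n) / Rabs (1 - Rabs (e_exp h mu n)) * M * d.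
Proof.
  intros HP g d Hg. set (P := Rabs (e_exp h mu n)) in *.
  assert (Hd : 0 <= d) by (eapply Rle_trans; [apply Rabs_pos | apply (Hg O)]).
  assert (HA : Rabs (1 - P) = P - 1) by (rewrite Rabs_left; lra).
  set (V k := P * S_k h n mu k / (P - 1)).
  assert (HV0 : forall k, 0 <= V k).
  { intro k. unfold V. pose proof (Sk_pos h n mu Hn Hz k).
    apply Rmult_le_pos. nra. left; apply Rinv_0_lt_compat; lra. }
  assert (HVid : forall k, V k = / Rabs (1 + h * mu k) * (1 + V (S k))).
  { intro k. pose proof (Sk_ident h n mu Hn Hp Hz k) as I. fold P in I.
    assert (Ha : 0 < Rabs (1 + h * mu k)) by (apply Rabs_pos_lt; auto).
    unfold V. assert (E : S_k h n mu (S k) = Rabs (1 + h * mu k) * S_k h n mu k - 1 + / P) by lra.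
    rewrite E. field. split; lra. }
  assert (Hpart : forall N k, sumR (qq k) N <= V k).
  { induction N; intro k. simpl. auto.
    rewrite sumR_front. rewrite (sumR_ext _ (fun i => / Rabs (1 + h * mu k) * qq (S k) i)).
    2:{ intros; apply qq_S. }
    rewrite sumR_scal, HVid.
    replace (qq k 0) with (/ Rabs (1 + h * mu k)).
    2:{ unfold qq. simpl. rewrite Nat.add_0_r. ring. }
    assert (0 < / Rabs (1 + h * mu k)) by (apply Rinv_0_lt_compat, Rabs_pos_lt; auto).
    specialize (IHN (S k)). nra. }
  assert (Hq : forall k, ex_series (qq k) /\ Series (qq k) <= V k).
  { intro k.
    assert (F : ex_finite_lim_seq (sum_n (qq k))).
    { apply ex_finite_lim_seq_incr with (V k).
      - intro N. rewrite sum_Sn. pose proof (qq_pos k (S N)). change (plus ?a ?b) with (a + b). lra.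
      - intro N. rewrite sum_n_sumR. apply Hpart. }
    destruct F as [l Hl].
    assert (Hs : is_series (qq k) l) by exact Hl.
    split. exists l; exact Hs.
    rewrite (is_series_unique _ _ Hs).
    pose proof (is_lim_seq_le _ _ _ _ (fun N => (ltac:(rewrite sum_n_sumR; apply Hpart) : sum_n (qq k) N <= V k)) Hl (is_lim_seq_const (V k))) as L.
    simpl in L. exact L. }
  assert (Hcb : forall k m, Rabs (cc g k m) <= d * qq k m).
  { intros k m. unfold cc, qq. rewrite Rabs_mult, prodR_Rabs.
    rewrite (prodR_ext (fun i => Rabs (/ (1 + h * mu (k + i)%nat))) (fun i => / Rabs (1 + h * mu (k + i)%nat))).
    2:{ intros; apply Rabs_inv. }
    apply Rmult_le_compat_r. left. apply (qq_pos k m). apply Hg. }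
  assert (Hce : forall k, ex_series (cc g k) /\ ex_series (fun m => Rabs (cc g k m))).
  { intro k. destruct (Hq k) as [Hq1 _].
    assert (Eb : ex_series (fun m => d * qq k m)) by exact (ex_series_scal_l d (qq k) Hq1).
    split; apply (@ex_series_le R_AbsRing R_CompleteNormedModule) with (fun m => d * qq k m); auto; intro m; change norm with Rabs; simpl.
    all: try rewrite Rabs_Rabsolu; apply Hcb. }
  exists (fun k => - h * Series (cc g k)).
  split.
  - intro k. destruct (Hce k) as [E1 _].
    rewrite (Series_incr_1 (cc g k) E1).
    rewrite (Series_ext (fun m => cc g k (S m)) (fun m => / (1 + h * mu k) * cc g (S k) m)) by (intro; apply cc_S).
    rewrite Series_scal_l.
    replace (cc g k 0) with (g k * / (1 + h * mu k)) by (unfold cc; simpl; rewrite Nat.add_0_r; ring). field. auto.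
  - intro k. destruct (Hce k) as [E1 E2]. destruct (Hq k) as [Hq1 Hq2].
    rewrite Rabs_mult, Rabs_Ropp, (Rabs_right h) by lra.
    apply Rle_trans with (h * (d * V k)).
    + apply Rmult_le_compat_l. lra.
      eapply Rle_trans. apply Series_Rabs; auto.
      eapply Rle_trans. apply Series_le with (b := fun m => d * qq k m).
      intro m; split; [apply Rabs_pos | apply Hcb].
      exact (ex_series_scal_l d (qq k) Hq1).
      rewrite Series_scal_l. apply Rmult_le_compat_l; auto.
    + replace (h * (d * V k)) with (h * d * (P * S_k h n mu k / Rabs (1 - P))) by (unfold V; rewrite HA; ring).
      apply final_bound; auto. lra. lra. left; apply Sk_pos; auto.
Qed.
End C.

Lemma core (h : R) (n : nat) (mu : nat -> R) (M : R) : 0 < h -> (0 < n)%nat ->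
  (forall k, mu (k + n)%nat = mu k) -> (forall k, 1 + h * mu k <> 0) ->
  Rabs (e_exp h mu n) <> 1 -> (forall k, S_k h n mu k <= M) ->
  forall g d, (forall k, Rabs (g k) <= d) ->
  exists u, (forall k, u (S k) = (1 + h * mu k) * u k + h * g k) /\
   forall k, Rabs (u k) <= h * Rabs (e_exp h mu n) / Rabs (1 - Rabs (e_exp h mu n)) * M * d.
Proof. intros. destruct (Rlt_dec (Rabs (e_exp h mu n)) 1).
  eapply core_lt; eauto. eapply core_gt; eauto. lra. Qed.

Lemma K0_pos h n mu : 0 < h -> (0 < n)%nat -> (forall k, 1 + h * mu k <> 0) ->
  Rabs (e_exp h mu n) <> 1 -> 0 < K0 h n mu.
Proof. intros. unfold K0. pose proof (P_pos h n mu H1).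
  assert (0 < Rabs (1 - Rabs (e_exp h mu n))) by (apply Rabs_pos_lt; lra).
  assert (0 < maxR (S_k h n mu) (n - 1)).
  { eapply Rlt_le_trans. apply (Sk_pos h n mu H0 H1 O). apply maxR_ge. lia. }
  apply Rmult_lt_0_compat; auto. unfold Rdiv. apply Rmult_lt_0_compat. nra. apply Rinv_0_lt_compat; auto.
Qed.

Lemma Sk_le_max h n mu k : (0 < n)%nat -> (forall k, mu (k + n)%nat = mu k) ->
  S_k h n mu k <= maxR (S_k h n mu) (n - 1).
Proof. intros. rewrite <- Sk_mod; auto. apply maxR_ge.
  pose proof (Nat.mod_upper_bound k n). lia. Qed.

Theorem theorem3p2 (h : R) (n : nat) (lam : nat -> R) :
  0 < h ->
  is_ncycle n lam ->
  (forall k, lam k <> 1 / h /\ lam k <> - (1 / h)) ->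
  0 < Rabs (e_exp h lam n) -> Rabs (e_exp h lam n) <> 1 ->
  0 < Rabs (e_exp h (negf lam) n) -> Rabs (e_exp h (negf lam) n) <> 1 ->
  HU_stable (hillL h lam) (fun _ => 0) (K0 h n lam * K0 h n (negf lam)).
Proof.
  intros Hh [Hn [Hp _]] Hl He1 He1' He2 He2'.
  assert (Hz1 : forall k, 1 + h * lam k <> 0).
  { intros k E. destruct (Hl k) as [_ H]. apply H. field_simplify_eq; [|lra]. lra. }
  assert (Hz2 : forall k, 1 + h * negf lam k <> 0).
  { intros k E. destruct (Hl k) as [H _]. apply H. unfold negf in E. field_simplify_eq; [|lra]. lra. }
  assert (Hp2 : forall k, negf lam (k + n)%nat = negf lam k) by (intro; unfold negf; rewrite Hp; auto).
  set (mu1 := fun k => lam (S k)).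
  assert (Hp1 : forall k, mu1 (k + n)%nat = mu1 k) by (intro; unfold mu1; rewrite <- (Hp (S k)); auto).
  assert (Hz1' : forall k, 1 + h * mu1 k <> 0) by (intro; apply Hz1).
  assert (Ee : e_exp h mu1 n = e_exp h lam n).
  { unfold e_exp, mu1. apply (cyclic n (fun i => 1 + h * lam i) Hn) with (s := 1%nat).
    intro; rewrite Hp; auto. auto. }
  assert (HM1 : forall k, S_k h n mu1 k <= maxR (S_k h n lam) (n - 1)).
  { intro k. replace (S_k h n mu1 k) with (S_k h n lam (S k)).
    apply Sk_le_max; auto.
    rewrite !Sk_nomod; auto. }
  split.
  { apply Rmult_lt_0_compat; apply K0_pos; auto. }
  intros eps Heps xi Hxi.
  set (g := hillL h lam xi).
  assert (Hg : forall k, Rabs (g k) <= eps) by (intro k; specialize (Hxi k); rewrite Rminus_0_r in Hxi; exact Hxi).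
  destruct (core h n mu1 _ Hh Hn Hp1 Hz1' ltac:(rewrite Ee; auto) HM1 g eps Hg) as [v [Hv Hvb]].
  rewrite Ee in Hvb. fold (K0 h n lam) in Hvb.
  destruct (core h n (negf lam) _ Hh Hn Hp2 Hz2 He2' (fun k => Sk_le_max h n (negf lam) k Hn Hp2) v _ Hvb) as [u [Hu Hub]].
  fold (K0 h n (negf lam)) in Hub.
  exists (fun k => xi k - u k). split.
  - intro k. unfold hillL, Dh. rewrite (Hu (S k)), (Hu k), (Hv k).
    unfold g, hillL, Dh, mu1, negf. field. lra.
  - intro k. replace (xi k - (xi k - u k)) with (u k) by ring.
    eapply Rle_trans. apply Hub. right. ring.
Qed.
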